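(* In the two-shock setting ($v_\pm>0$, $u_->u_+$, intermediate state $(u_*^{\epsilon_1\epsilon_2},v_*^{\epsilon_1\epsilon_2})$, shock speeds $\sigma_1^{\epsilon_1\epsilon_2},\sigma_2^{\epsilon_1\epsilon_2}$), $$\lim_{\epsilon_1,\epsilon_2\to0}u_*^{\epsilon_1\epsilon_2}=\lim_{\epsilon_1,\epsilon_2\to0}\sigma_1^{\epsilon_1\epsilon_2}=\lim_{\epsilon_1,\epsilon_2\to0}\sigma_2^{\epsilon_1\epsilon_2}=\frac{u_-+u_+}{2}.$$
   Context: Perturbed Brio system: $u_t+(\tfrac12u^2+\tfrac12\epsilon_1v^2)_x=0$, $v_t+(uv-\epsilon_2v)_x=0$, $\epsilon_1,\epsilon_2>0$, $v>0$, with Riemann data $(u_-,v_-)$ for $x<0$, $(u_+,v_+)$ for $x>0$. A two-shock Riemann solution is one with an intermediate state $(u_*,v_* )$, $v_*>\max(v_-,v_+)$, $u_+<u_*<u_-$, such that $$u_*=u_-+(v_*-v_-)\frac{\epsilon_2-\sqrt{\epsilon_2^2+4\epsilon_1(v_*+v_-)^2}}{v_*+v_-},\qquad u_+=u_*+(v_+-v_* )\frac{\epsilon_2+\sqrt{\epsilon_2^2+4\epsilon_1(v_*+v_+)^2}}{v_*+v_+},$$ with shock speeds $\sigma_1=u_-+\frac{v_*(u_*-u_-)}{v_*-v_-}-\epsilon_2$ and $\sigma_2=u_++\frac{v_*(u_+-u_* )}{v_+-v_*}-\epsilon_2$. The limit is taken over parameters for which this solution exists. *)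

(* Defs.v *)
From Stdlib Require Import Reals Lra.
Open Scope R_scope.

(* (us, vs) is the intermediate state of a two-shock Riemann solution of the
   perturbed Brio system with parameters e1, e2 and data (um,vm) | (up,vp). *)
Definition two_shock (e1 e2 um vm up vp us vs : R) : Prop :=
  Rmax vm vp < vs /\ up < us /\ us < um /\
  us = um + (vs - vm) * ((e2 - sqrt (e2 ^ 2 + 4 * e1 * (vs + vm) ^ 2)) / (vs + vm)) /\
  up = us + (vp - vs) * ((e2 + sqrt (e2 ^ 2 + 4 * e1 * (vs + vp) ^ 2)) / (vs + vp)).

Definition sigma1 (e2 um vm us vs : R) : R := um + vs * (us - um) / (vs - vm) - e2.
Definition sigma2 (e2 up vp us vs : R) : R := up + vs * (up - us) / (vp - vs) - e2.

(* Main.v *)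
Require Import Defs.
From Stdlib Require Import Reals Lra Psatz.
Open Scope R_scope.
From Stdlib Require Import Ranalysis5.
From Coquelicot Require Import Coquelicot.

Lemma sq_facts X : 0 <= X -> sqrt X * sqrt X = X /\ 0 <= sqrt X.
Proof. intros; split; [apply sqrt_sqrt; auto | apply sqrt_pos]. Qed.

Lemma main_bound e1 e2 um vm up vp us vs : 0 < vm -> 0 < vp -> 0 < e1 -> 0 < e2 ->
  two_shock e1 e2 um vm up vp us vs ->
  Rabs (us - (um + up) / 2) <= 4*(1+vm+vp)*(sqrt e1 + e2) /\
  Rabs (sigma1 e2 um vm us vs - (um + up) / 2) <= 4*(1+vm+vp)*(sqrt e1 + e2) /\
  Rabs (sigma2 e2 up vp us vs - (um + up) / 2) <= 4*(1+vm+vp)*(sqrt e1 + e2).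
Proof.
  intros hvm hvp he1 he2 [Hmax [H1 [H2 [E1 E2]]]].
  assert (hvsm : vm < vs) by (generalize (Rmax_l vm vp); lra).
  assert (hvsp : vp < vs) by (generalize (Rmax_r vm vp); lra).
  destruct (sq_facts e1 (Rlt_le _ _ he1)) as [ht ht0].
  set (t := sqrt e1) in *.
  set (a := vs + vm) in *. set (b := vs + vp) in *.
  assert (ha : 0 < a) by (unfold a; lra). assert (hb : 0 < b) by (unfold b; lra).
  destruct (sq_facts (e2 ^ 2 + 4 * e1 * a ^ 2)) as [hS1 hS10]; [nra|].
  destruct (sq_facts (e2 ^ 2 + 4 * e1 * b ^ 2)) as [hS2 hS20]; [nra|].
  set (S1 := sqrt (e2 ^ 2 + 4 * e1 * a ^ 2)) in *.
  set (S2 := sqrt (e2 ^ 2 + 4 * e1 * b ^ 2)) in *.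
  rewrite <- ht in hS1, hS2.
  assert (htp : 0 < t) by nra.
  assert (L1 : e2 <= S1) by nra.
  assert (U1 : S1 <= e2 + 2*t*a).
  { destruct (Rle_or_lt S1 (e2 + 2*t*a)) as [h|h]; [exact h|exfalso].
    assert (0 <= t*a) by (apply Rmult_le_pos; lra). nra. }
  assert (U2 : S2 <= e2 + 2*t*b).
  { destruct (Rle_or_lt S2 (e2 + 2*t*b)) as [h|h]; [exact h|exfalso].
    assert (0 <= t*b) by (apply Rmult_le_pos; lra). nra. }
  assert (G1 : 2*t*a <= S1) by nra.
  assert (G2 : 2*t*b <= S2) by nra.
  assert (hab : a - b = vm - vp) by (unfold a, b; ring).
  assert (D : Rabs (S1 - S2) <= 2*t*Rabs (vm - vp)).
  { set (w := Rabs (vm - vp)).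
    assert (hw1 : vm - vp <= w) by (unfold w; apply Rle_abs).
    assert (hw3 : - (vm - vp) <= w) by (unfold w; rewrite <- Rabs_Ropp; apply Rle_abs).
    assert (E : (S1 - S2) * (S1 + S2) = 4*(t*t)*(vm - vp)*(a+b)) by (rewrite <- hab; replace ((S1 - S2) * (S1 + S2)) with (S1*S1 - S2*S2) by ring; rewrite hS1, hS2; ring).
    apply Rabs_le; split.
    - destruct (Rle_or_lt (-(2*t*w)) (S1 - S2)) as [h|h]; [exact h|].
      exfalso. assert (0 <= t*w) by (apply Rmult_le_pos; lra).
      assert (h1 : (S1-S2)*(S1+S2) < -(2*t*w)*(S1+S2)) by (apply Rmult_lt_compat_r; lra).
      assert (h2 : (t*w)*(2*t*(a+b)) <= (t*w)*(S1+S2)) by (apply Rmult_le_compat_l; lra).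
      assert (h3 : (t*t*(a+b))*(-w) <= (t*t*(a+b))*(vm-vp)).
      { apply Rmult_le_compat_l; [|lra]. apply Rmult_le_pos; [nra|lra]. }
      nra.
    - destruct (Rle_or_lt (S1 - S2) (2*t*w)) as [h|h]; [exact h|].
      exfalso. assert (0 <= t*w) by (apply Rmult_le_pos; lra).
      assert (h1 : (2*t*w)*(S1+S2) < (S1-S2)*(S1+S2)) by (apply Rmult_lt_compat_r; lra).
      assert (h2 : (t*w)*(2*t*(a+b)) <= (t*w)*(S1+S2)) by (apply Rmult_le_compat_l; lra).
      assert (h3 : (t*t*(a+b))*(vm-vp) <= (t*t*(a+b))*w).
      { apply Rmult_le_compat_l; [|lra]. apply Rmult_le_pos; [nra|lra]. }
      nra. }
  set (P := S1 - e2). set (Q := S2 + e2).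
  set (r := vm * P / a). set (s := vp * Q / b).
  assert (hr : r * a = vm * P) by (unfold r; field; lra).
  assert (hs : s * b = vp * Q) by (unfold s; field; lra).
  assert (r0 : 0 <= r) by (unfold P in *; nra).
  assert (r1 : r <= 2*t*vm) by (unfold P in *; nra).
  assert (s0 : 0 <= s) by (unfold Q in *; nra).
  assert (s1 : s <= 2*e2 + 2*t*vp) by (unfold Q, b in *; nra).
  clearbody S1 S2 t.
  assert (Iu : us - (um+up)/2 = (Q - P)/2 - s + r).
  { unfold r, s, P, Q. rewrite E2. rewrite E1. unfold a, b. field. lra. }
  assert (I1 : sigma1 e2 um vm us vs - (um+up)/2 = (Q - P)/2 - s - e2).
  { unfold sigma1, r, s, P, Q. rewrite E2. rewrite E1. unfold a, b. field. lra. }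
  assert (I2 : sigma2 e2 up vp us vs - (um+up)/2 = (Q - P)/2 + r - e2).
  { unfold sigma2, r, s, P, Q. rewrite E2. rewrite E1. unfold a, b. field. lra. }
  assert (hw := Rabs_triang vm (-vp)). rewrite Rabs_Ropp in hw.
  rewrite (Rabs_right vm) in hw by lra. rewrite (Rabs_right vp) in hw by lra.
  assert (hQP : Rabs (Q - P) <= 2*t*(vm+vp) + 2*e2).
  { replace (Q - P) with ((S2 - S1) + 2*e2) by (unfold P, Q; ring).
    eapply Rle_trans; [apply Rabs_triang|]. rewrite Rabs_minus_sym.
    rewrite (Rabs_right (2*e2)) by lra.
    assert (2*t*Rabs (vm - vp) <= 2*t*(vm+vp)) by (apply Rmult_le_compat_l; [lra| exact hw]). lra. }
  assert (hq1 := Rle_abs (Q-P)). assert (hq2 := Rle_abs (-(Q-P))). rewrite Rabs_Ropp in hq2.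
  rewrite Iu, I1, I2.
  repeat split; apply Rabs_le; nra.
Qed.

Lemma cpt (f : R -> R) x : ex_derive f x -> continuity_pt f x.
Proof. intros H. apply continuity_pt_filterlim. exact (ex_derive_continuous f x H). Qed.

Theorem lemma5p3 (um vm up vp : R) (hvm : 0 < vm) (hvp : 0 < vp) (hu : up < um) :
  (forall d : R, 0 < d -> exists e1 e2 us vs : R,
      0 < e1 < d /\ 0 < e2 < d /\ two_shock e1 e2 um vm up vp us vs) /\
  (forall eta : R, 0 < eta -> exists d : R, 0 < d /\
     forall e1 e2 us vs : R, 0 < e1 < d -> 0 < e2 < d ->
       two_shock e1 e2 um vm up vp us vs ->
       Rabs (us - (um + up) / 2) < eta /\
       Rabs (sigma1 e2 um vm us vs - (um + up) / 2) < eta /\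
       Rabs (sigma2 e2 up vp us vs - (um + up) / 2) < eta).
Proof.
  split.
  - intros d hd.
    set (M := Rmax vm vp). set (Dl := um - up).
    assert (hM1 : vm <= M) by apply Rmax_l. assert (hM2 : vp <= M) by apply Rmax_r.
    set (t := Rmin (Rmin (1/2) (d/2)) (Rmin vm (Dl/(4+16*M)))).
    assert (ht1 : t <= 1/2) by (unfold t; eapply Rle_trans; [apply Rmin_l|apply Rmin_l]).
    assert (ht2 : t <= d/2) by (unfold t; eapply Rle_trans; [apply Rmin_l|apply Rmin_r]).
    assert (ht3 : t <= vm) by (unfold t; eapply Rle_trans; [apply Rmin_r|apply Rmin_l]).
    assert (ht4 : t <= Dl/(4+16*M)) by (unfold t; eapply Rle_trans; [apply Rmin_r|apply Rmin_r]).
    assert (hDM : 0 < Dl/(4+16*M)) by (apply Rdiv_lt_0_compat; unfold Dl; lra).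
    assert (ht0 : 0 < t).
    { unfold t. apply Rmin_glb_lt; apply Rmin_glb_lt; lra. }
    assert (ht4' : t * (4+16*M) <= Dl).
    { apply (Rmult_le_compat_r (4+16*M)) in ht4; [|lra].
      unfold Rdiv in ht4. rewrite Rmult_assoc, Rinv_l, Rmult_1_r in ht4; lra. }
    clearbody t.
    set (e := t*t).
    set (f := fun v => up - (um + (v - vm) * ((e - sqrt (e ^ 2 + 4 * e * (v + vm) ^ 2)) / (v + vm))
                 + (vp - v) * ((e + sqrt (e ^ 2 + 4 * e * (v + vp) ^ 2)) / (v + vp)))).
    set (y := M + Dl/t + 1).
    assert (hDt : 0 < Dl / t) by (apply Rdiv_lt_0_compat; unfold Dl; lra).
    assert (hDt' : Dl / t * t = Dl) by (field; lra).
    assert (he : 0 < e) by (unfold e; nra).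
    assert (est : forall v, 0 < v -> 
       let S1 := sqrt (e ^ 2 + 4 * e * (v + vm) ^ 2) in
       let S2 := sqrt (e ^ 2 + 4 * e * (v + vp) ^ 2) in
       (e <= S1 /\ 2*t*(v+vm) <= S1 <= e + 2*t*(v+vm)) /\ 2*t*(v+vp) <= S2 <= e + 2*t*(v+vp)).
    { intros v hv S1 S2.
      destruct (sq_facts (e ^ 2 + 4 * e * (v + vm) ^ 2)) as [h1 h10]; [apply Rplus_le_le_0_compat; [apply pow2_ge_0 | apply Rmult_le_pos; [lra| apply pow2_ge_0]]|].
      destruct (sq_facts (e ^ 2 + 4 * e * (v + vp) ^ 2)) as [h2 h20]; [apply Rplus_le_le_0_compat; [apply pow2_ge_0 | apply Rmult_le_pos; [lra| apply pow2_ge_0]]|].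
      fold S1 in h1, h10. fold S2 in h2, h20. clearbody S1 S2. unfold e in h1, h2.
      assert (0 <= t*(v+vm)) by nra. assert (0 <= t*(v+vp)) by nra.
      repeat split.
      - destruct (Rle_or_lt e S1) as [h|h]; [exact h|exfalso]. unfold e in *. nra.
      - destruct (Rle_or_lt (2*t*(v+vm)) S1) as [h|h]; [exact h|exfalso]. nra.
      - destruct (Rle_or_lt S1 (e + 2*t*(v+vm))) as [h|h]; [exact h|exfalso]. unfold e in *. nra.
      - destruct (Rle_or_lt (2*t*(v+vp)) S2) as [h|h]; [exact h|exfalso]. nra.
      - destruct (Rle_or_lt S2 (e + 2*t*(v+vp))) as [h|h]; [exact h|exfalso]. unfold e in *. nra. }
    assert (hMpos : 0 < M) by lra.
    assert (fx : f M < 0).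
    { destruct (est M hMpos) as [[a0 [a1 a2]] [b1 b2]]. unfold f.
      set (S1 := sqrt (e ^ 2 + 4 * e * (M + vm) ^ 2)) in *.
      set (S2 := sqrt (e ^ 2 + 4 * e * (M + vp) ^ 2)) in *.
      set (r := (M - vm) / (M + vm)). set (s := (M - vp) / (M + vp)).
      assert (r0 : 0 <= r <= 1).
      { unfold r; split; [apply Rmult_le_pos; [lra|left; apply Rinv_0_lt_compat; lra]|].
        apply Rmult_le_reg_r with (M+vm); [lra|]. unfold Rdiv. rewrite Rmult_assoc, Rinv_l; lra. }
      assert (s0 : 0 <= s <= 1).
      { unfold s; split; [apply Rmult_le_pos; [lra|left; apply Rinv_0_lt_compat; lra]|].
        apply Rmult_le_reg_r with (M+vp); [lra|]. unfold Rdiv. rewrite Rmult_assoc, Rinv_l; lra. }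
      replace ((M - vm) * ((e - S1) / (M + vm))) with (- (r * (S1 - e))) by (unfold r; field; lra).
      replace ((vp - M) * ((e + S2) / (M + vp))) with (- (s * (S2 + e))) by (unfold s; field; lra).
      assert (0 <= S2 + e) by nra.
      assert (0 <= (1 - r) * (S1 - e)) by (apply Rmult_le_pos; lra).
      assert (0 <= (1 - s) * (S2 + e)) by (apply Rmult_le_pos; lra).
      assert (e <= t/2) by (unfold e; nra).
      assert (2*t*(M+vm) + 2*t*(M+vp) <= t * (16*M)) by nra.
      unfold Dl in ht4'. nra. }
    assert (hy : M < y) by (unfold y; lra).
    assert (hy0 : 0 < y) by lra.
    assert (fy : 0 < f y).
    { destruct (est y hy0) as [[a0 [a1 a2]] [b1 b2]]. unfold f.
      set (S1 := sqrt (e ^ 2 + 4 * e * (y + vm) ^ 2)) in *.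
      set (S2 := sqrt (e ^ 2 + 4 * e * (y + vp) ^ 2)) in *.
      set (r := (S1 - e) / (y + vm)). set (s := (S2 + e) / (y + vp)).
      assert (hr : r * (y+vm) = S1 - e) by (unfold r; field; lra).
      assert (0 <= t*(y+vp)) by (apply Rmult_le_pos; lra).
      assert (hs : 0 <= s) by (unfold s; apply Rmult_le_pos; [lra|left; apply Rinv_0_lt_compat; lra]).
      replace ((y - vm) * ((e - S1) / (y + vm))) with (- ((y - vm) * r)) by (unfold r; field; lra).
      replace ((vp - y) * ((e + S2) / (y + vp))) with (- ((y - vp) * s)) by (unfold s; field; lra).
      assert (hr1 : t <= r).
      { assert (e <= t * (y + vm)) by (unfold e; nra).
        apply Rmult_le_reg_r with (y+vm); lra. }
      assert (0 <= (y - vp) * s) by (apply Rmult_le_pos; lra).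
      assert (Dl/t + 1 <= y - vm) by (unfold y; lra).
      assert ((Dl/t + 1) * t <= (y - vm) * r) by (apply Rmult_le_compat; lra).
      unfold Dl in *. nra. }
    destruct (IVT_interv f M y) as [z [hz fz]].
    { intros v hv. apply cpt. unfold f. auto_derive. assert (0 < v + vm) by lra. assert (0 < v+vp) by lra. assert (0 < (v+vm)*((v+vm)*1)) by nra. assert (0 < (v+vp)*((v+vp)*1)) by nra. repeat split; try (intro; lra); nra. }
    exact hy. exact fx. exact fy.
    assert (hzM : M < z).
    { destruct hz as [hz _]. destruct hz as [hz|hz]; [exact hz|]. subst z. lra. }
    exists e, e, (um + (z - vm) * ((e - sqrt (e ^ 2 + 4 * e * (z + vm) ^ 2)) / (z + vm))), z.
    assert (e < d) by (unfold e; nra).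
    split; [lra|]. split; [lra|].
    destruct (est z ltac:(lra)) as [[a0 [a1 a2]] [b1 b2]].
    set (Sa := sqrt (e ^ 2 + 4 * e * (z + vm) ^ 2)) in *.
    set (Sb := sqrt (e ^ 2 + 4 * e * (z + vp) ^ 2)) in *.
    unfold f in fz. fold Sa Sb in fz.
    assert (hzm : vm < z) by lra. assert (hzp : vp < z) by lra.
    assert (eSa : e < Sa). { assert (t*t < 2*t*(z+vm)) by nra. unfold e; lra. }
    assert (pos1 : 0 < (z - vm) * ((Sa - e) / (z + vm))).
    { apply Rmult_lt_0_compat; [lra|]. apply Rdiv_lt_0_compat; lra. }
    assert (pos2 : 0 < (z - vp) * ((Sb + e) / (z + vp))).
    { apply Rmult_lt_0_compat; [lra|]. assert (0 <= t*(z+vp)) by nra. apply Rdiv_lt_0_compat; lra. }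
    replace ((z - vm) * ((e - Sa) / (z + vm))) with (- ((z - vm) * ((Sa - e) / (z + vm)))) in fz |- * by (field; lra).
    replace ((vp - z) * ((e + Sb) / (z + vp))) with (- ((z - vp) * ((Sb + e) / (z + vp)))) in fz by (field; lra).
    unfold two_shock. change (Rmax vm vp) with M.
    change (sqrt (e ^ 2 + 4 * e * (z + vm) ^ 2)) with Sa.
    change (sqrt (e ^ 2 + 4 * e * (z + vp) ^ 2)) with Sb.
    repeat split; try lra.
  - intros eta heta.
    set (K := 4*(1+vm+vp)). assert (hK : 0 < K) by (unfold K; lra).
    set (c := eta / (2*K)). assert (hc : 0 < c) by (unfold c; apply Rdiv_lt_0_compat; lra).
    assert (hcK : 2*K*c = eta) by (unfold c; field; lra).
    exists (Rmin 1 (c*c)). split.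
    { apply Rmin_glb_lt; nra. }
    intros e1 e2 us vs he1 he2 H.
    assert (hd1 := Rmin_l 1 (c*c)). assert (hd2 := Rmin_r 1 (c*c)).
    destruct (sq_facts e1 ltac:(lra)) as [ht ht0].
    assert (htc : sqrt e1 < c) by nra.
    assert (hec : e2 < c).
    { destruct (Rle_or_lt 1 c); nra. }
    destruct (main_bound e1 e2 um vm up vp us vs hvm hvp ltac:(lra) ltac:(lra) H) as [B1 [B2 B3]].
    fold K in B1, B2, B3.
    assert (K * (sqrt e1 + e2) < eta) by nra.
    repeat split; lra.
Qed.
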